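(* For any finite alphabet $\mathfrak{G}$, the set of co-irreducible elements of the $\mathfrak{G}$-prefix poset is the set of all stringy $\mathfrak{G}$-trees. Moreover, the number of such elements of degree $d\geq 1$ is $\mathcal{R}_\mathfrak{G}(1)\,\mathcal{R}'_\mathfrak{G}(1)^{d-1}$, that is $(\#\mathfrak{G})\,\big(\sum_{\mathtt{a}\in\mathfrak{G}}|\mathtt{a}|\big)^{d-1}$.
   Context: $\mathfrak{G}$ is a finite alphabet (letters with arities $|\mathtt{a}|\geq 1$), and $\mathcal{R}_\mathfrak{G}(t) = \sum_{\mathtt{a}\in\mathfrak{G}} t^{|\mathtt{a}|}$ with derivative $\mathcal{R}'_\mathfrak{G}$. A $\mathfrak{G}$-tree is either the leaf (the tree with no internal node) or a root decorated by a letter $\mathtt{a}\in\mathfrak{G}$ with $|\mathtt{a}|$ children that are $\mathfrak{G}$-trees; its degree is its number of internal nodes. The $\mathfrak{G}$-prefix poset is the set of $\mathfrak{G}$-trees ordered by $\mathfrak{s}\preceq\mathfrak{t}$ iff $\mathfrak{t}$ is obtained by grafting some $\mathfrak{G}$-trees onto the leaves of $\mathfrak{s}$; its covering relation consists in replacing a leaf by an internal node all of whose children are leaves. A tree is co-irreducible if it covers at most one element. A $\mathfrak{G}$-tree is stringy if each of its internal nodes has at most one child that is an internal node. *)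

(* Defs.v *)
From HB Require Import structures.
From mathcomp Require Import all_boot.
Set Implicit Arguments. Unset Strict Implicit. Unset Printing Implicit Defensive.

(* An alphabet is a finite type [G] with an arity
   function [ar : G -> nat] (all arities >= 1, imposed in the theorem).
   Raw trees: a leaf, or a node labelled by a letter with a list of children;
   a G-tree is a raw tree which is well formed ([wf ar]): every node labelled
   by [a] has exactly [ar a] children. *)

Inductive tree (G : Type) : Type :=
| Leaf : tree G
| Node : G -> seq (tree G) -> tree G.
Arguments Leaf {G}.

Section TreeCount.
Variable G : countType.

Fixpoint enc (t : tree G) : GenTree.tree G :=
  match t with
  | Leaf => GenTree.Node 0 [::]
  | Node a ts => GenTree.Node 1 (GenTree.Leaf a :: map enc ts)
  end.

Fixpoint opt_seq (T : Type) (l : seq (option T)) : option (seq T) :=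
  match l with
  | [::] => Some [::]
  | Some x :: l' => omap (cons x) (opt_seq l')
  | None :: _ => None
  end.

Fixpoint dec (t : GenTree.tree G) : option (tree G) :=
  match t with
  | GenTree.Node 0 [::] => Some Leaf
  | GenTree.Node 1 (GenTree.Leaf a :: us) =>
      omap (Node a) (opt_seq (map dec us))
  | _ => None
  end.

Fixpoint encK_aux (t : tree G) : dec (enc t) = Some t :=
  match t return dec (enc t) = Some t with
  | Leaf => erefl
  | Node a ts =>
      f_equal (omap (Node a))
        ((fix g (l : seq (tree G)) :
            opt_seq (map dec (map enc l)) = Some l :=
            match l return opt_seq (map dec (map enc l)) = Some l with
            | [::] => erefl
            | t :: l' =>
                @eq_ind_r _ (Some t)
                  (fun o => match o with
                            | Some x => omap (cons x) (opt_seq (map dec (map enc l')))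
                            | None => None end = Some (t :: l'))
                  (@eq_ind_r _ (Some l') (fun o => omap (cons t) o = Some (t :: l')) erefl _ (g l'))
                  _ (encK_aux t)
            end) ts)
  end.

Lemma encK : pcancel enc dec. Proof. exact: encK_aux. Qed.

HB.instance Definition _ := Countable.copy (tree G) (pcan_type encK).
End TreeCount.

Section Trees.
Variables (G : finType) (ar : G -> nat).

Fixpoint wf (t : tree G) : bool :=
  match t with
  | Leaf => true
  | Node a ts => (size ts == ar a) && all wf ts
  end.

Fixpoint degree (t : tree G) : nat :=
  match t with
  | Leaf => 0
  | Node _ ts => (sumn (map degree ts)).+1
  end.

Definition is_internal (t : tree G) : bool :=
  if t is Node _ _ then true else false.

Fixpoint stringy (t : tree G) : bool :=
  match t with
  | Leaf => true
  | Node _ ts => (count is_internal ts <= 1) && all stringy ts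
  end.

Fixpoint prefix (s t : tree G) : bool :=
  match s, t with
  | Leaf, _ => true
  | Node a ss, Node b ts => (a == b) && all2 prefix ss ts
  | Node _ _, Leaf => false
  end.

(* covering relation of the G-prefix poset (elements = well-formed trees):
   [covers t s] iff s is covered by t *)
Definition covers (t s : tree G) : Prop :=
  [/\ wf s, wf t, prefix s t, s != t &
      forall u, wf u -> prefix s u -> prefix u t -> u = s \/ u = t].

Definition coirreducible (t : tree G) : Prop :=
  forall s1 s2, covers t s1 -> covers t s2 -> s1 = s2.
End Trees.

(* Main.v *)
Require Import Defs.
From HB Require Import structures.
From mathcomp Require Import all_boot zify.
Set Implicit Arguments. Unset Strict Implicit. Unset Printing Implicit Defensive.

Fixpoint InT (T : Type) (u : T) (l : seq T) : Prop :=
  if l is x :: l' then x = u \/ InT u l' else False.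

Section Aux.
Variable G : Type.
Variable P : tree G -> Prop.
Hypothesis HL : P Leaf.
Hypothesis HN : forall a ts, (forall u, InT u ts -> P u) -> P (Node a ts).
Definition tree_ind2 : forall t, P t :=
  fix F (t : tree G) : P t :=
  match t with
  | Leaf => HL
  | Node a ts => @HN a ts
      ((fix g (l : seq (tree G)) : forall u, InT u l -> P u :=
        match l with
        | [::] => fun u H => False_ind _ H
        | x :: l' => fun u H => match H with
                                | or_introl e => eq_ind x P (F x) u e
                                | or_intror H' => g l' u H' end
        end) ts)
  end.
End Aux.
Arguments tree_ind2 {G} P HL HN t.

Section Part1.
Variables (G : finType) (ar : G -> nat).
Implicit Types (s t u c : tree G) (ts ss l : seq (tree G)).

Lemma prefix_refl t : Defs.prefix t t.
Proof.
elim/(@tree_ind2 G): t => //= a ts IH; rewrite eqxx /=.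
elim: ts IH => //= t ts IHl IH; rewrite IH /=; last by left.
by apply: IHl => u Hu; apply: IH; right.
Qed.

Lemma all2_prefix_refl ts : all2 (@Defs.prefix G) ts ts.
Proof. by elim: ts => //= t ts ->; rewrite prefix_refl. Qed.

Lemma prefix_leaf s : Defs.prefix s Leaf -> s = Leaf.
Proof. by case: s. Qed.

Lemma prefix_degree s t : Defs.prefix s t ->
  degree s <= degree t /\ (degree s = degree t -> s = t).
Proof.
elim/(@tree_ind2 G): s t => [|a ss IH] [|b ts] //=.
all: try by move=> _; split.
case/andP=> /eqP <- H.
suff [H1 H2] : sumn (map (@degree G) ss) <= sumn (map (@degree G) ts) /\
  (sumn (map (@degree G) ss) = sumn (map (@degree G) ts) -> ss = ts).
  by split => // -[] /H2 ->.
elim: ss ts IH H => [|s ss IHl] [|t ts] //= IH /andP[Hst Hl].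
have [h1 h2] := IH s (or_introl erefl) t Hst.
have [h3 h4] := IHl ts (fun u Hu => IH u (or_intror Hu)) Hl.
split; first exact: leq_add.
move=> E.
have E1 : degree s = degree t by lia.
by rewrite (h2 E1) h4 //; lia.
Qed.

Lemma prefix_lt s t : Defs.prefix s t -> s != t -> degree s < degree t.
Proof.
move=> /prefix_degree [H1 H2] Hne; rewrite ltn_neqAle H1 andbT.
by apply/eqP => /H2 E; rewrite E eqxx in Hne.
Qed.


Lemma InT_cat (ts1 ts2 : seq (tree G)) c : InT c (ts1 ++ c :: ts2).
Proof. by elim: ts1 => [|x l IH] /=; [left | right]. Qed.

Lemma InT_consr (x : tree G) l u : InT u l -> InT u (x :: l).
Proof. by right. Qed.

Lemma all_InT (P Q : pred (tree G)) ts :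
  (forall u, InT u ts -> P u -> Q u) -> all P ts -> all Q ts.
Proof.
elim: ts => //= x l IH H /andP[Px Pl].
rewrite (H x (or_introl erefl) Px) /=; apply: IH => // u Hu; apply: H; by right.
Qed.

Lemma split_has (p : pred (tree G)) ts : has p ts ->
  exists ts1 c ts2, [/\ ts = ts1 ++ c :: ts2, ~~ has p ts1 & p c].
Proof.
elim: ts => //= x l IH; case: (boolP (p x)) => px /=.
  by move=> _; exists [::], x, l.
case/IH => ts1 [c [ts2 [-> h pc]]]; exists (x :: ts1), c, ts2.
by rewrite /= (negbTE px) h.
Qed.

Fixpoint cut t : tree G :=
  match t with
  | Leaf => Leaf
  | Node a ts => if has (@is_internal G) ts then Node a (map cut ts) else Leaf
  end.

Lemma wf_cut t : wf ar t -> wf ar (cut t).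
Proof.
elim/(@tree_ind2 G): t => //= a ts IH /andP[/eqP sz H].
case: ifP => //= _; rewrite size_map sz eqxx /= all_map.
by apply: all_InT H => u Hu; apply: IH.
Qed.

Lemma prefix_cut t : Defs.prefix (cut t) t.
Proof.
elim/(@tree_ind2 G): t => //= a ts IH.
case: ifP => //= _; rewrite eqxx /=.
elim: ts IH {a} => //= x l IHl IH; rewrite IH /=; last by left.
by apply: IHl => u Hu; apply: IH; right.
Qed.

Lemma degree_cut t : degree (cut t) + is_internal t <= degree t.
Proof.
elim/(@tree_ind2 G): t => //= a ts IH.
have H : sumn (map (@degree G) (map cut ts)) + count (@is_internal G) ts
          <= sumn (map (@degree G) ts).
  elim: ts IH {a} => //= x l IHl IH.
  have := IH x (or_introl erefl); have := IHl (fun u Hu => IH u (or_intror Hu)).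
  lia.
case: ifP => /= Hh; last by lia.
by move: Hh; rewrite has_count; lia.
Qed.

Lemma cut_below t s : stringy t -> Defs.prefix s t -> s != t ->
  Defs.prefix s (cut t).
Proof.
elim/(@tree_ind2 G): t s => [|a ts IH] [|b ss] //=.
move=> /andP[Hc Hs] /andP[/eqP <- Hp] Hne.
have Hne' : ss != ts by apply: contraNneq Hne => ->.
case: ifP => Hh /=.
  rewrite eqxx /=.
  elim: ts ss IH Hc Hs Hp Hne' {Hne Hh} => [|t ts IHl] [|s ss] //= IH Hc /andP[st sts] /andP[pst pl] Hne.
  case: (boolP (is_internal t)) => it.
    have /hasPn Hc0 : ~~ has (@is_internal G) ts by move: Hc; rewrite has_count it; lia.
    have Ets : ts = nseq (size ts) Leaf.
      clear -Hc0; elim: ts Hc0 => //= x l IHx H.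
      move: (H x (mem_head _ _)); case: x {H} (H) => //= H _.
      by rewrite -IHx // => u Hu; apply: H; rewrite inE Hu orbT.
    have Ess : ss = ts.
      move: pl; rewrite Ets; elim: ss (size ts) {Ets Hne IHl sts Hc0} => [|y l IHy] [|n] //=.
      by case/andP => /prefix_leaf -> /IHy ->.
    subst ss.
    have Hst : s != t by apply: contraNneq Hne => ->; rewrite eqxx.
    rewrite (IH t (or_introl erefl) s st pst Hst) /=.
    rewrite Ets; elim: (size ts) => //= n ->; by [].
  have {}Hc : count (@is_internal G) ts <= 1 by move: Hc; rewrite /= (negbTE it).
  have {}IH := fun u Hu => IH u (@or_intror _ _ Hu).
  move: Hne; case: t it pst {st} => //= _ /prefix_leaf -> /= Hne.
  apply: IHl => //.
exfalso; move/negbT: Hh => /hasPn Hh.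
move/negP: Hne'; apply; apply/eqP.
elim: ts ss Hp Hh {IH Hc Hs Hne} => [|t ts IHl] [|s ss] //= /andP[pst pl] H.
have : is_internal t = false by apply/negbTE/H; rewrite mem_head.
case: t pst {H} (H) => //= /prefix_leaf -> H _; congr (_ :: _).
by apply: IHl => // u Hu; apply: H; rewrite inE Hu orbT.
Qed.

Definition cov t s := [/\ wf ar s, Defs.prefix s t & (degree s).+1 = degree t].

Lemma plug a ts1 ts2 c x :
  wf ar (Node a (ts1 ++ c :: ts2)) -> wf ar x -> Defs.prefix x c ->
  [/\ wf ar (Node a (ts1 ++ x :: ts2)),
      Defs.prefix (Node a (ts1 ++ x :: ts2)) (Node a (ts1 ++ c :: ts2)) &
      degree (Node a (ts1 ++ x :: ts2)) + degree c =
      degree (Node a (ts1 ++ c :: ts2)) + degree x].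
Proof.
move=> /= /andP[sz Hw] wx pxc; split.
- by move: sz Hw; rewrite !size_cat /= !all_cat /= wx => -> /and3P[-> _ ->].
- rewrite eqxx /=; elim: ts1 {sz Hw} => /= [|y l ->]; last by rewrite prefix_refl.
  by rewrite pxc all2_prefix_refl.
- rewrite !map_cat !sumn_cat /=; lia.
Qed.

Lemma lemmaB t : wf ar t -> is_internal t -> exists s, cov t s.
Proof.
elim/(@tree_ind2 G): t => //= a ts IH /andP[sz Hw] _.
case: (boolP (has (@is_internal G) ts)) => Hh.
  have [ts1 [c [ts2 [E _ ic]]]] := split_has Hh.
  subst ts.
  have wc : wf ar c by move: Hw; rewrite all_cat /= => /and3P[_ ->].
  have [x [wx pxc dx]] := IH c (InT_cat _ _ _) wc ic.
  have [] := plug (a := a) (ts1 := ts1) (ts2 := ts2) _ wx pxc.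
    by rewrite /= sz Hw.
  move=> w p d; exists (Node a (ts1 ++ x :: ts2)); split => //.
  move: d; rewrite -dx; clear; lia.
exists Leaf; split => //=; congr (_.+1).
move/hasPn: Hh; clear; elim: ts => //= x l IH H.
rewrite -IH; last by move=> u Hu; apply: H; rewrite inE Hu orbT.
by move: (H x (mem_head _ _)); case: x {H} => //.
Qed.

Lemma cov_covers t s : wf ar t -> cov t s -> covers ar t s.
Proof.
move=> wt [ws pst dst]; split => //.
  by apply/eqP => E; move: dst; rewrite E; lia.
move=> u wu psu put.
case: (eqVneq s u) => [->|nsu]; first by left.
right; have := prefix_lt psu nsu; have [h1 h2] := prefix_degree put.
move=> h3; apply: h2; lia.
Qed.

Lemma covers_cut t s : stringy t -> covers ar t s -> s = cut t.
Proof.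
move=> st [ws wt pst nst H].
have pc := cut_below st pst nst.
case: (H (cut t) (wf_cut wt) pc (prefix_cut t)) => // E.
exfalso; have := degree_cut t; rewrite E => h.
have it : ~~ is_internal t by apply/negP => it; move: h; rewrite it addn1 ltnn.
move: it nst pst; case: t {H st wt E pc h} => //= _.
by move=> nst /prefix_leaf E; rewrite E eqxx in nst.
Qed.

Lemma not_stringy t : wf ar t -> ~~ stringy t ->
  exists s1 s2, [/\ cov t s1, cov t s2 & s1 != s2].
Proof.
elim/(@tree_ind2 G): t => //= a ts IH /andP[sz Hw].
rewrite negb_and -ltnNge; case/orP => [Hc | Hs].
  have Hh : has (@is_internal G) ts by rewrite has_count; lia.
  have [ts1 [c [rest [E nh ic]]]] := split_has Hh.
  have Hh2 : has (@is_internal G) rest.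
    move: Hc; rewrite E count_cat /= ic.
    by move/negbTE: nh; rewrite has_count => /negbT; rewrite -leqNgt leqn0 => /eqP ->; rewrite has_count.
  have [ts2 [c' [ts3 [E2 _ ic']]]] := split_has Hh2.
  subst ts rest.
  have wc : wf ar c by move: Hw; rewrite all_cat /= => /and3P[_ ->].
  have wc' : wf ar c' by move: Hw; rewrite all_cat /= all_cat /= => /and4P[_ _ _ /andP[->]].
  have [x [wx pxc dx]] := lemmaB wc ic.
  have [x' [wx' pxc' dx']] := lemmaB wc' ic'.
  have wt : wf ar (Node a (ts1 ++ c :: ts2 ++ c' :: ts3)) by rewrite /= sz Hw.
  have [w1 p1 d1] := plug wt wx pxc.
  have E3 : ts1 ++ c :: ts2 ++ c' :: ts3 = (ts1 ++ c :: ts2) ++ c' :: ts3 by rewrite -catA.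
  rewrite E3 in wt.
  have [w2 p2 d2] := plug wt wx' pxc'.
  rewrite -E3 in p2 d2; rewrite -catA cat_cons in w2 p2 d2.
  exists (Node a (ts1 ++ x :: ts2 ++ c' :: ts3)), (Node a (ts1 ++ c :: ts2 ++ x' :: ts3)).
  split.
  - by split => //; move: d1 dx; clear; lia.
  - by split => //; move: d2 dx'; clear; lia.
  apply/negP => /eqP [] /eqP; rewrite eqseq_cat // eqseq_cons => /andP[_ /andP[/eqP E _]].
  by move: dx; rewrite E; clear; lia.
have [ts1 [c [ts2 [E _ nsc]]]] := @split_has (predC (@stringy G)) ts (ltac:(by rewrite has_predC)).
subst ts.
have wc : wf ar c by move: Hw; rewrite all_cat /= => /and3P[_ ->].
have [s1 [s2 [[w1 p1 d1] [w2 p2 d2] n12]]] := IH c (InT_cat _ _ _) wc nsc.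
have wt : wf ar (Node a (ts1 ++ c :: ts2)) by rewrite /= sz Hw.
have [w1' p1' d1'] := plug wt w1 p1.
have [w2' p2' d2'] := plug wt w2 p2.
exists (Node a (ts1 ++ s1 :: ts2)), (Node a (ts1 ++ s2 :: ts2)); split.
- by split => //; move: d1 d1'; clear; lia.
- by split => //; move: d2 d2'; clear; lia.
apply: contra n12 => /eqP [] /eqP; rewrite eqseq_cat // eqseq_cons. by case/and3P.
Qed.

Lemma part1 t : wf ar t -> (coirreducible ar t <-> stringy t).
Proof.
move=> wt; split.
  move=> Hco; apply/negPn/negP => ns.
  have [s1 [s2 [c1 c2 n12]]] := not_stringy wt ns.
  by move: n12; rewrite (Hco _ _ (cov_covers wt c1) (cov_covers wt c2)) eqxx.
by move=> st s1 s2 /(covers_cut st) -> /(covers_cut st) ->.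
Qed.

End Part1.

Section Part2.
Variables (G : finType) (ar : G -> nat).
Implicit Types (s t u c : tree G) (ts ss l : seq (tree G)).

Lemma leaves_nseq ts : ~~ has (@is_internal G) ts -> ts = nseq (size ts) Leaf.
Proof. by elim: ts => //= -[|a l] ts IH //= /IH <-. Qed.

Lemma sumn_deg0 ts : (sumn (map (@degree G) ts) == 0) = ~~ has (@is_internal G) ts.
Proof. by elim: ts => //= -[|a l] ts IH //=; rewrite add0n. Qed.

Lemma nseq_props n :
  [/\ all (wf ar) (nseq n (@Leaf G)), all (@stringy G) (nseq n Leaf),
      count (@is_internal G) (nseq n Leaf) = 0 &
      sumn (map (@degree G) (nseq n Leaf)) = 0].
Proof. by elim: n => //= n [-> -> -> ->]. Qed.

Definition build a i t : tree G :=
  Node a (nseq i Leaf ++ t :: nseq (ar a - i.+1) Leaf).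

Definition base := [seq Node a (nseq (ar a) Leaf) | a <- enum G].
Definition Pidx := [seq (a, i) | a <- enum G, i <- iota 0 (ar a)].
Definition trip S := [seq (q, t) | q <- Pidx, t <- S].
Definition step S := [seq build p.1.1 p.1.2 p.2 | p <- trip S].
Fixpoint strs n := if n is n'.+1 then step (strs n') else base.

Lemma mem_base t : (t \in base) = [&& wf ar t, stringy t & degree t == 1].
Proof.
apply/idP/idP.
  case/mapP => a _ ->; have [h1 h2 h3 h4] := nseq_props (ar a).
  by rewrite /= size_nseq eqxx h1 h2 h3 h4.
case: t => //= a ts /and3P[/andP[/eqP sz _] _].
rewrite eqSS sumn_deg0 => /leaves_nseq E.
by rewrite E sz; apply: map_f; rewrite mem_enum.
Qed.

Lemma mem_step n S :
  (forall t, (t \in S) = [&& wf ar t, stringy t & degree t == n.+1]) ->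
  forall t, (t \in step S) = [&& wf ar t, stringy t & degree t == n.+2].
Proof.
move=> HS t; apply/idP/idP.
  case/mapP => -[[a i] c] /allpairsP [[[a' i'] c'] /= [Hq Hc [-> -> ->]]] ->.
  case/allpairsPdep: Hq => a'' [i'' [_ Hi [-> ->]]].
  rewrite mem_iota add0n in Hi.
  move: Hc; rewrite HS => /and3P[wc sc /eqP dc].
  have [h1 h2 h3 h4] := nseq_props i''.
  have [k1 k2 k3 k4] := nseq_props (ar a'' - i''.+1).
  rewrite /build /= size_cat /= size_nseq size_nseq all_cat /= all_cat /=.
  rewrite h1 h2 k1 k2 wc sc count_cat /= h3 k3 map_cat sumn_cat /= h4 k4 dc.
  have -> : i'' + (ar a'' - i''.+1).+1 = ar a'' by lia.
  by rewrite eqxx /= !addn0 !add0n leq_b1 eqxx.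
case: t => //= a ts /and3P[/andP[/eqP sz wts] /andP[cts sts] /eqP dt].
have Hh : has (@is_internal G) ts by apply/negPn; rewrite -sumn_deg0; case: dt => ->.
have [ts1 [c [ts2 [E nh ic]]]] := split_has Hh.
subst ts.
have nh2 : ~~ has (@is_internal G) ts2.
  move: cts; rewrite count_cat /= ic has_count.
  by move: nh; rewrite has_count; lia.
rewrite (leaves_nseq nh) (leaves_nseq nh2) in sz dt wts sts *.
have [h1 h2 h3 h4] := nseq_props (size ts1).
have [k1 k2 k3 k4] := nseq_props (size ts2).
move: sz dt wts sts; rewrite size_cat /= !size_nseq map_cat sumn_cat /= h4 k4 add0n addn0.
rewrite !all_cat /= => sz [dc] /and3P[_ wc _] /and3P[_ sc _].
have -> : size ts2 = ar a - (size ts1).+1 by lia.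
apply/mapP; exists ((a, size ts1), c) => //.
apply/allpairsP; exists ((a, size ts1), c); split => //; last by rewrite HS wc sc dc eqxx.
apply/allpairsPdep; exists a, (size ts1); split => //; first by rewrite mem_enum.
by rewrite mem_iota add0n; lia.
Qed.

Lemma mem_strs n t : (t \in strs n) = [&& wf ar t, stringy t & degree t == n.+1].
Proof. by elim: n t => [|n IH] t /=; [exact: mem_base | exact: mem_step]. Qed.

Lemma uniq_Pidx : uniq Pidx.
Proof.
apply: allpairs_uniq_dep; first exact: enum_uniq.
  by move=> x _; apply: iota_uniq.
by move=> [x y] [x' y'] _ _ /= [e1 e2]; subst.
Qed.

Lemma find_build i c l : is_internal c ->
  find (@is_internal G) (nseq i Leaf ++ c :: l) = i.
Proof. by move=> ic; elim: i => /= [|i ->]; rewrite ?ic. Qed.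

Lemma uniq_strs n : uniq (strs n).
Proof.
elim: n => [|n IH] /=.
  rewrite map_inj_uniq ?enum_uniq // => a b [] ->.
  by [].
rewrite map_inj_in_uniq.
  apply: allpairs_uniq => //; first exact: uniq_Pidx.
  by move=> x y _ _; case: x; case: y => ? ? ? ? /= ->.
move=> p p' /allpairsP [[q1 t1] /= [_ H1 ->]]
  /allpairsP [[q2 t2] /= [_ H2 ->]] /=.
rewrite !mem_strs in H1 H2.
have ic : is_internal t1 by case/and3P: H1; case: (t1).
have ic' : is_internal t2 by case/and3P: H2; case: (t2).
rewrite /build => -[ea E]; subst.
have ei : q1.2 = q2.2.
  by have := find_build q1.2 (nseq (ar q1.1 - q1.2.+1) Leaf) ic; rewrite E find_build.
move: E; rewrite ei => /eqP; rewrite eqseq_cat ?size_nseq // eqseq_cons => /andP[_ /andP[/eqP -> _]].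
by case: q1 q2 ea ei {H1 H2 ic} => ? ? [? ?] /= -> ->.
Qed.

Lemma size_strs n : size (strs n) = #|G| * (\sum_(a : G) ar a) ^ n.
Proof.
elim: n => [|n IH] /=.
  by rewrite size_map cardE muln1.
rewrite size_map size_allpairs IH size_allpairs_dep.
have -> : sumn [seq size (iota 0 (ar x)) | x <- enum G] = \sum_(a : G) ar a.
  by rewrite sumnE big_map big_enum /=; apply: eq_bigr => a _; rewrite size_iota.
by rewrite expnS mulnCA.
Qed.

End Part2.

Theorem proposition3p6 (G : finType) (ar : G -> nat)
    (ar_pos : forall a : G, 0 < ar a) :
  (forall t : tree G, wf ar t -> (coirreducible ar t <-> stringy t)) /\
  (forall d : nat, 0 < d ->
     exists s : seq (tree G),
       [/\ uniq s,
           forall t, t \in s <-> [/\ wf ar t, coirreducible ar t & degree t = d]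
         & size s = #|G| * (\sum_(a : G) ar a) ^ (d - 1)]).
Proof.
split; first exact: part1.
case=> // n _; exists (strs ar n); split.
- exact: uniq_strs.
- move=> t; rewrite mem_strs; split.
    by case/and3P => w s /eqP d; split => //; apply/part1.
  by case => w c d; rewrite w d eqxx (part1 w).1 // andbT.
- by rewrite size_strs subn1.
Qed.
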